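(* Let $d\ge1$. Then $\mathcal U(H(d,2))$ is isomorphic to the one-object groupoid $\{\ast\}/\!/(\mathbb Z/2\mathbb Z)$ (one object $\ast$, two morphisms $0=\mathrm{id}_\ast$ and $1$), and under this identification $\varpi(H(d,2))=(\bar\lambda,s_1)$ is given by $\bar\lambda(x)=\ast$ for objects $x$, $\bar\lambda((g,x))=\sum_{i=1}^d g_i\in\mathbb Z/2\mathbb Z$ for morphisms $(g,x)$, and $s_1(a)=a\bmod 2$ for $a\in\{0,1,\dots,d\}$. Consequently, for every category $\mathcal C$ every morphism-colored functor from $H(d,2)$ to $(\mathcal C,\mathrm{id})$ factors uniquely through this morphism-colored functor to $(\{\ast\}/\!/(\mathbb Z/2\mathbb Z),\mathrm{id})$, and for all positive integers $d,d'$ there is a one-to-one correspondence between morphism-colored functors $H(d,2)\to(\mathcal C,\mathrm{id})$ and morphism-colored functors $H(d',2)\to(\mathcal C,\mathrm{id})$.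
   Context: A morphism-colored category is a pair $(\mathcal C,\lambda)$ where $\mathcal C$ is a category and $\lambda$ assigns to each morphism $f$ a color $\lambda(f)$, such that whenever $\lambda(g)=\lambda(f_1\circ f_2)$ there exist composable $g_1,g_2$ with $g=g_1\circ g_2$, $\lambda(g_i)=\lambda(f_i)$. $(\mathcal C,\mathrm{id})$ (each morphism colored by itself) is the discrete morphism-colored category. A morphism-colored functor $(F,\gamma):(\mathcal C,\lambda)\to(\mathcal C',\lambda')$ is a functor $F$ with a map $\gamma$ on colors such that $\gamma(\lambda(f))=\lambda'(F(f))$ for all morphisms $f$; composition is componentwise. For a small morphism-colored groupoid $(\mathcal G,\lambda)$ with $\lambda(f)=\lambda(g)\Rightarrow\lambda(f^{-1})=\lambda(g^{-1})$: $I_1=\lambda(\mathrm{Mor}\,\mathcal G)$, $\lambda_1$ the corestriction; $I_0=\{\lambda(\mathrm{id}_x)\}$, $\lambda_0(x)=\lambda(\mathrm{id}_x)$; $\overset{1}{\sim}$ on $I_1$ relates $\lambda(f_1\circ\cdots\circ f_l)$ and $\lambda(g_1\circ\cdots\circ g_l)$ for composable sequences with $\lambda(f_i)=\lambda(g_i)$ for all $i$ (an equivalence relation), with quotient $s_1:I_1\to\bar I_1$; $\overset{0}{\sim}$ on $I_0$ relates $\lambda_0(\mathrm{source} f)$, $\lambda_0(\mathrm{source} g)$ whenever $s_1\lambda_1(f)=s_1\lambda_1(g)$, with quotient $s_0:I_0\to\bar I_0$. $\mathcal U(\mathcal G,\lambda)$ is the groupoid with objects $\bar I_0$, morphisms $\bar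 I_1$, source/target of $s_1\lambda_1(f)$ being $s_0\lambda_0$ of source/target of $f$, composition $s_1\lambda_1(f)\circ s_1\lambda_1(g)=s_1\lambda_1(f\circ g)$; $\bar\lambda:\mathcal G\to\mathcal U(\mathcal G,\lambda)$ is $x\mapsto s_0\lambda_0(x)$, $f\mapsto s_1\lambda_1(f)$, and $\varpi(\mathcal G,\lambda)=(\bar\lambda,s_1)$. Hamming schemoid: let $G=(\mathbb Z/n\mathbb Z)^d$ and $w(x)=\#\{i:x_i\neq0\}$ the Hamming weight. $G/\!/G$ is the action groupoid: objects $G$, morphisms $G\times G$, where $(g,x)$ has source $x$ and target $g+x$, composition $(h,g+x)\circ(g,x)=(h+g,x)$, identity $(0,x)$, inverse $(g,x)^{-1}=(-g,g+x)$. Let $\pi(g,x)=g$. Then $H(d,n)=(G/\!/G,\,w\circ\pi)$, with colors in $\{0,\dots,d\}$. *)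

(* Defs.v *)
From HB Require Import structures.
From mathcomp Require Import all_boot all_order all_algebra.
Set Implicit Arguments. Unset Strict Implicit. Unset Printing Implicit Defensive.
Import GRing.Theory.
Local Open Scope ring_scope.

(* mcomp f g stands for f \o g and is only meaningful when msrc f = mtgt g. *)
Record catD := CatD {
  Ob : Type; Mo : Type;
  msrc : Mo -> Ob; mtgt : Mo -> Ob;
  idm : Ob -> Mo; mcomp : Mo -> Mo -> Mo }.

Definition is_cat (C : catD) : Prop :=
  (forall x : Ob C, msrc (idm x) = x /\ mtgt (idm x) = x) /\
  (forall f g : Mo C, msrc f = mtgt g ->
      msrc (mcomp f g) = msrc g /\ mtgt (mcomp f g) = mtgt f) /\
  (forall f : Mo C, mcomp (idm (mtgt f)) f = f /\ mcomp f (idm (msrc f)) = f) /\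
  (forall f g h : Mo C, msrc f = mtgt g -> msrc g = mtgt h ->
      mcomp f (mcomp g h) = mcomp (mcomp f g) h).

Record functorD (C D : catD) := FunctorD {
  fob : Ob C -> Ob D; fmo : Mo C -> Mo D }.

Definition is_functor (C D : catD) (F : functorD C D) : Prop :=
  (forall f, msrc (fmo F f) = fob F (msrc f)) /\
  (forall f, mtgt (fmo F f) = fob F (mtgt f)) /\
  (forall x, fmo F (idm x) = idm (fob F x)) /\
  (forall f g, msrc f = mtgt g -> fmo F (mcomp f g) = mcomp (fmo F f) (fmo F g)).

Record ccat := CCat { ccat_cat :> catD; Col : Type; lam : Mo ccat_cat -> Col }.

Definition disc (C : catD) : ccat := @CCat C (Mo C) (fun f => f).

Record mcfunD (X Y : ccat) := MCFunD {
  mcF : functorD X Y; mcG : Col X -> Col Y }.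

Definition is_mcfun (X Y : ccat) (P : mcfunD X Y) : Prop :=
  is_functor (mcF P) /\ forall f, mcG P (lam f) = lam (fmo (mcF P) f).

Definition mcf_comp (X Y Z : ccat) (Q : mcfunD Y Z) (P : mcfunD X Y) : mcfunD X Z :=
  MCFunD (FunctorD (fun x => fob (mcF Q) (fob (mcF P) x))
                   (fun f => fmo (mcF Q) (fmo (mcF P) f)))
         (fun c => mcG Q (mcG P c)).

Fixpoint ccomp (C : catD) (f : Mo C) (fs : seq (Mo C)) : Mo C :=
  match fs with [::] => f | g :: gs => mcomp f (ccomp g gs) end.

Fixpoint chain (C : catD) (f : Mo C) (fs : seq (Mo C)) : Prop :=
  match fs with [::] => True | g :: gs => msrc f = mtgt g /\ chain g gs end.

Definition sim1 (X : ccat) (a b : Col X) : Prop :=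
  exists (f : Mo X) fs (g : Mo X) gs,
    chain f fs /\ chain g gs /\ lam f = lam g /\
    map (@lam X) fs = map (@lam X) gs /\
    a = lam (ccomp f fs) /\ b = lam (ccomp g gs).

Definition Gd (d : nat) := {ffun 'I_d -> 'Z_2}.
Definition hw (d : nat) (x : Gd d) : nat := #|[set i | x i != 0]|.

Definition Hcat (d : nat) : catD :=
  @CatD (Gd d) (Gd d * Gd d)
        (fun f => f.2) (fun f => f.1 + f.2)
        (fun x => (0, x))
        (fun f g => (f.1 + g.1, g.2)).

Definition H2 (d : nat) : ccat :=
  @CCat (Hcat d) 'I_d.+1 (fun f => inord (hw f.1)).

Definition Z2cat : catD :=
  @CatD unit 'Z_2 (fun _ => tt) (fun _ => tt) (fun _ => 0) (fun a b => a + b).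

Definition s1 (d : nat) (a : 'I_d.+1) : 'Z_2 := inZp a.

Definition varpi (d : nat) : mcfunD (H2 d) (disc Z2cat) :=
  @MCFunD (H2 d) (disc Z2cat) (FunctorD (C := Hcat d) (D := Z2cat) (fun _ => tt)
                   (fun f => @s1 d (inord (hw f.1))))
         (fun a : 'I_d.+1 => s1 a).

(* Main.v *)
Require Import Defs.
From HB Require Import structures.
From mathcomp Require Import all_boot all_order all_algebra zify.
From Stdlib Require Import FunctionalExtensionality ProofIrrelevance.
Import GRing.Theory.
Local Open Scope ring_scope.

Lemma z2_cases (z : 'Z_2) : z = 0 \/ z = 1.
Proof. case: z => [[|[|m]]] Hm; [left|right|]; try by apply/val_inj. by []. Qed.

Lemma z2_add_self (z : 'Z_2) : z + z = 0.
Proof. by case: (z2_cases z) => ->; apply/val_inj. Qed.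

Lemma z2_nz (z : 'Z_2) : z = (z != 0)%:R.
Proof. by case: (z2_cases z) => ->; apply/val_inj. Qed.

Lemma hw_le d (x : Gd d) : (hw x <= d)%N.
Proof. by rewrite /hw; apply: leq_trans (max_card _) _; rewrite card_ord. Qed.

Lemma s1_inord d (n : nat) : (n <= d)%N -> s1 (inord n : 'I_d.+1) = n%:R.
Proof. by move=> h; rewrite /s1 inordK // Zp_nat. Qed.

Lemma K d (x : Gd d) : s1 (inord (hw x) : 'I_d.+1) = \sum_(i < d) x i.
Proof.
rewrite s1_inord ?hw_le // /hw.
rewrite (eq_bigr (fun i => ((x i != 0)%:R : 'Z_2))); last by move=> i _; rewrite -z2_nz.
rewrite -natr_sum -sum1_card big_mkcond /=.
by apply: congr1; apply: eq_bigr => i _; rewrite inE; case: (x i != 0).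
Qed.

Definition ind d (lo hi : nat) : Gd d := [ffun k : 'I_d => ((lo <= k) && (k < hi))%N%:R].

Lemma hw_ind d lo n : (lo + n <= d)%N -> hw (ind d lo (lo + n)) = n.
Proof.
elim: n => [|n IH] h.
  rewrite /hw; apply/eqP; rewrite cards_eq0; apply/eqP/setP => k.
  rewrite !inE ffunE addn0; apply/negbTE; case: (leqP lo k) => //= ->; apply/negP => /eqP; apply/eqP.

have hlt : (lo + n < d)%N by rewrite addnS in h. rewrite /hw.
have -> : [set i | ind d lo (lo + n.+1) i != 0] =
   (Ordinal hlt) |: [set i | ind d lo (lo + n) i != 0].
  apply/setP => k; rewrite !inE !ffunE.
  case: (boolP (lo <= k)%N) => hk /=; last first.
    by have -> : (k == Ordinal hlt) = false by apply/negbTE/eqP => /(congr1 val) /= e; rewrite e leq_addr in hk.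
  rewrite addnS ltnS leq_eqVlt -(inj_eq val_inj) /=.
  rewrite -(inj_eq val_inj) /=. by case: (k == lo + n :> nat); case: (k < lo + n)%N.
rewrite (cardsU1 (Ordinal hlt)) inE ffunE /= ltnn andbF eqxx /= add1n.
by have := IH (ltnW hlt); rewrite /hw => ->.
Qed.

Lemma indD d lo mid hi : (lo <= mid)%N -> (mid <= hi)%N ->
  ind d lo mid + ind d mid hi = ind d lo hi.
Proof.
move=> h1 h2; apply/ffunP => k; rewrite !ffunE.
case: (ltnP k lo) => a /=.
  have b : (k < mid)%N by apply: leq_trans a h1.
  by rewrite (leqNgt mid) b /= add0r.
case: (ltnP k mid) => b /=.
  by rewrite (leq_trans b h2) addr0.
by rewrite add0r.
Qed.

Lemma cat_H d : is_cat (Hcat d).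
Proof.
split; [|split; [|split]] => /=.
- by move=> x; rewrite add0r.
- by move=> f g ->; rewrite addrA.
- by move=> f; rewrite add0r addr0; case: f.
- by move=> f g h _ _; rewrite addrA.
Qed.

Lemma ccomp_tgt (C : catD) : is_cat C -> forall (g : Mo C) gs, chain g gs -> mtgt (ccomp g gs) = mtgt g.
Proof.
move=> [_ [Hc _]] g gs; elim: gs g => [//|h hs IH] g /= [e ch].
by have [_ ->] := Hc g (ccomp h hs) (etrans e (esym (IH h ch))).
Qed.

Lemma fun_ccomp (C D : catD) (F : functorD C D) : is_cat C -> is_functor F ->
  forall (f : Mo C) fs, chain f fs -> fmo F (ccomp f fs) = ccomp (fmo F f) (map (fmo F) fs).
Proof.
move=> HC [_ [_ [_ HF]]] f fs; elim: fs f => [//|g gs IH] f /= [e ch].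
rewrite HF; first by rewrite IH.
by rewrite (@ccomp_tgt C HC _ _ ch).
Qed.

Lemma s1lam d (f : Mo (H2 d)) : s1 (lam f) = \sum_(i < d) f.1 i.
Proof. exact: K. Qed.

Lemma s1_comp d (f g : Mo (H2 d)) : s1 (lam (mcomp f g)) = s1 (lam f) + s1 (lam g).
Proof. by rewrite !s1lam /= -big_split /=; apply: eq_bigr => i _; rewrite ffunE. Qed.

Lemma s1_ccomp d (f : Mo (H2 d)) fs :
  s1 (lam (ccomp f fs)) = s1 (lam f) + foldr (fun c acc => s1 c + acc) 0 (map (@lam (H2 d)) fs).
Proof.
elim: fs f => [|g gs IH] f /=; first by rewrite addr0.
by rewrite s1_comp IH.
Qed.

Lemma sim1_sym (X : ccat) a b : sim1 a b -> @sim1 X b a.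
Proof.
move=> [f [fs [g [gs [? [? [? [? [? ?]]]]]]]]].
by exists g, gs, f, fs.
Qed.

Lemma z2ffun d (x : Gd d) : x + x = 0.
Proof. by apply/ffunP => i; rewrite !ffunE z2_add_self. Qed.

Lemma sim1_fwd d (a b : Col (H2 d)) : sim1 a b -> s1 a = s1 b.
Proof.
move=> [f [fs [g [gs [_ [_ [e1 [e2 [-> ->]]]]]]]]].
by rewrite !s1_ccomp e1 e2.
Qed.


Lemma s1_val d (a : 'I_d.+1) : val (s1 a) = (a %% 2)%N.
Proof. by []. Qed.

Lemma sim1_le d (a b : 'I_d.+1) : (a <= b)%N -> s1 a = s1 b -> @sim1 (H2 d) a b.
Proof.
move=> hab /(congr1 val); rewrite !s1_val => hm.
set k := nat_of_ord a; set i := ((b - a) %/ 2)%N.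
have hb : (nat_of_ord b = k + i + i)%N by rewrite /k /i; lia.
have hd : (k + i + i <= d)%N by rewrite -hb -ltnS ltn_ord.
pose u1 := ind d 0 (k + i); pose u2 := ind d k (k + i); pose v2 := ind d (k + i) (k + i + i).
exists ((u1, u2) : Mo (H2 d)), [:: ((u2, 0) : Mo (H2 d))], ((u1, v2) : Mo (H2 d)), [:: ((v2, 0) : Mo (H2 d))].
split; first by rewrite /= addr0.
split; first by rewrite /= addr0.
split; first by [].
split.
- rewrite /=; congr [:: _]; apply: val_inj; rewrite /= !inordK ?ltnS ?hw_le //.
  by rewrite /u2 /v2 !hw_ind //; lia.
split.
- apply: val_inj; rewrite /= inordK ?ltnS ?hw_le //.
  have -> : u1 + u2 = ind d 0 k.
    by rewrite /u1 -(@indD d 0 k (k+i) (leq0n k) (leq_addr i k)) -addrA z2ffun addr0.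
  by rewrite -(add0n k) hw_ind //; lia.
- apply: val_inj; rewrite /= inordK ?ltnS ?hw_le //.
  rewrite /u1 /v2 indD ?leq_addr // hb -[X in ind d 0 X]add0n hw_ind //.
Qed.
Set Implicit Arguments. Unset Strict Implicit.

Lemma sim1_iff d (a b : 'I_d.+1) : @sim1 (H2 d) a b <-> s1 a = s1 b.
Proof.
split; first exact: sim1_fwd.
case: (leqP a b) => h e; first exact: sim1_le.
by apply: sim1_sym; apply: sim1_le; [exact: ltnW|].
Qed.

Lemma mcG_sim (X : ccat) (C : catD) (P : mcfunD X (disc C)) : is_cat X -> is_mcfun P ->
  forall a b, sim1 a b -> mcG P a = mcG P b.
Proof.
move=> HX [HF HP] a b [f [fs [g [gs [cf [cg [e1 [e2 [-> ->]]]]]]]]].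
rewrite !HP /= !(@fun_ccomp _ _ _ HX HF) //.
have ef : forall h, fmo (mcF P) h = mcG P (lam h) by move=> h; rewrite HP.
rewrite !ef e1; congr ccomp.
have em : forall s, map (fmo (mcF P)) s = map (mcG P) (map (@lam X) s).
  by move=> s; rewrite -map_comp; apply: eq_map.
by rewrite !em e2.
Qed.

Lemma fact d (C : catD) (P : mcfunD (H2 d) (disc C)) : is_mcfun P ->
  forall a b : 'I_d.+1, s1 a = s1 b -> mcG P a = mcG P b.
Proof. by move=> HP a b /sim1_iff; apply: mcG_sim => //; exact: cat_H. Qed.

Lemma fob_const d (C : catD) (P : mcfunD (H2 d) (disc C)) : is_cat C -> is_mcfun P ->
  forall x y, fob (mcF P) x = fob (mcF P) y.
Proof.
move=> [HC _] [[_ [_ [Hid _]]] HP] x y.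
rewrite -(proj1 (HC (fob (mcF P) x))) -(proj1 (HC (fob (mcF P) y))) -!Hid.
by rewrite -[fmo _ (idm x)]HP -[fmo _ (idm y)]HP.
Qed.

Definition col d (z : 'Z_2) : 'I_d.+1 := inord (val z).

Definition mz d (z : 'Z_2) : Mo (H2 d) := (ind d 0 (val z), 0).

Lemma val_le1 (z : 'Z_2) : (val z <= 1)%N.
Proof. by case: (z2_cases z) => ->. Qed.

Lemma lam_mz d (z : 'Z_2) : (0 < d)%N -> lam (mz d z) = col d z.
Proof.
move=> hd; rewrite /= /col; congr inord.
by rewrite -[X in ind d 0 X]add0n hw_ind //= (leq_trans (val_le1 z) hd).
Qed.

Lemma s1_col d (z : 'Z_2) : (0 < d)%N -> s1 (col d z) = z.
Proof. by move=> hd; rewrite /col s1_inord ?natr_Zp // (leq_trans (val_le1 z) hd). Qed.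

Definition buildQ d (C : catD) (P : mcfunD (H2 d) (disc C)) : mcfunD (disc Z2cat) (disc C) :=
  @MCFunD (disc Z2cat) (disc C)
    (@FunctorD Z2cat C (fun _ => fob (mcF P) 0) (fun z => mcG P (col d z)))
    (fun z => mcG P (col d z)).

Lemma FQ d (C : catD) (P : mcfunD (H2 d) (disc C)) : (0 < d)%N -> is_mcfun P ->
  forall f : Mo (H2 d), fmo (mcF (buildQ P)) (s1 (lam f)) = fmo (mcF P) f.
Proof.
move=> hd HP f; rewrite /= (fact HP (b := lam f)) ?s1_col //.
by rewrite (proj2 HP).
Qed.

Lemma varpi_mc d : is_mcfun (varpi d).
Proof.
split => //; split => //; split => //; split => //=.
- by move=> x; rewrite K big1 // => i _; rewrite ffunE.
- by move=> f g _; rewrite !K -big_split; apply: eq_bigr => i _; rewrite ffunE.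
Qed.

Lemma FQ' d (C : catD) (P : mcfunD (H2 d) (disc C)) : (0 < d)%N -> is_mcfun P ->
  forall (f : Mo (H2 d)) z, s1 (lam f) = z -> fmo (mcF (buildQ P)) z = fmo (mcF P) f.
Proof. by move=> hd HP f z <-; apply: FQ. Qed.

Lemma s1_mz d z : (0 < d)%N -> s1 (lam (mz d z)) = z.
Proof. by move=> hd; rewrite lam_mz // s1_col. Qed.

Lemma buildQ_mc d (C : catD) (P : mcfunD (H2 d) (disc C)) : (0 < d)%N -> is_cat C -> is_mcfun P ->
  is_mcfun (buildQ P).
Proof.
move=> hd HC HP; have [[Hs [Ht [Hi Hc]]] HG] := HP.
split => //; split; [|split; [|split]].
- move=> z; rewrite (FQ' hd HP (s1_mz z hd)) Hs /=; exact: fob_const.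
- move=> z; rewrite (FQ' hd HP (s1_mz z hd)) Ht /=; exact: fob_const.
- move=> x; have e : s1 (lam (idm (c:=H2 d) 0)) = 0 by rewrite /= K big1 // => i _; rewrite ffunE.
  by rewrite (FQ' hd HP e) Hi.
- move=> z w.
  pose f : Mo (H2 d) := ((mz d z).1, (mz d w).1).
  have ef : s1 (lam f) = z by exact: s1_mz.
  have ew := s1_mz w hd.
  have cfg : msrc (c:=H2 d) f = mtgt (c:=H2 d) (mz d w) by rewrite /= addr0.
  have e : s1 (lam (mcomp (c:=H2 d) f (mz d w))) = z + w by rewrite s1_comp ef ew.
  by rewrite (FQ' hd HP e) Hc // (FQ' hd HP ef) (FQ' hd HP ew).
Qed.

Lemma mcf_eta (X Y : ccat) (P : mcfunD X Y) :
  P = MCFunD (FunctorD (fob (mcF P)) (fmo (mcF P))) (mcG P).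
Proof. by case: P => [[]]. Qed.

Lemma buildQ_comp d (C : catD) (P : mcfunD (H2 d) (disc C)) : (0 < d)%N -> is_cat C -> is_mcfun P ->
  mcf_comp (buildQ P) (varpi d) = P.
Proof.
move=> hd HC HP; rewrite [RHS]mcf_eta /mcf_comp; congr (MCFunD (FunctorD _ _) _).
- by apply: functional_extensionality => x /=; apply: fob_const.
- by apply: functional_extensionality => f; apply: (FQ hd HP f).
- apply: functional_extensionality => c /=; apply: fact => //.
  by rewrite s1_col.
Qed.

Lemma buildQ_uniq d (C : catD) (P : mcfunD (H2 d) (disc C)) (Q : mcfunD (disc Z2cat) (disc C)) :
  (0 < d)%N -> is_mcfun Q -> mcf_comp Q (varpi d) = P -> buildQ P = Q.
Proof.
move=> hd HQ <-; rewrite [RHS]mcf_eta /buildQ /=; congr (MCFunD (FunctorD _ _) _).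
- by apply: functional_extensionality => -[].
- apply: functional_extensionality => z /=.
  by rewrite s1_col //; apply: (proj2 HQ z).
- by apply: functional_extensionality => z /=; rewrite s1_col.

Qed.

Lemma comp_mc (X Y Z : ccat) (Q : mcfunD Y Z) (P : mcfunD X Y) :
  is_mcfun Q -> is_mcfun P -> is_mcfun (mcf_comp Q P).
Proof.
move=> [[Qs [Qt [Qi Qc]]] QG] [[Ps [Pt [Pi Pc]]] PG].
split; first (split; [|split; [|split]]) => /=.
- by move=> f; rewrite Qs Ps.
- by move=> f; rewrite Qt Pt.
- by move=> x; rewrite Pi Qi.
- by move=> f g e; rewrite Pc // Qc // Ps Pt e.
- by move=> f; rewrite /mcf_comp /= PG QG.
Qed.

Unset Implicit Arguments. Set Strict Implicit.
Theorem proposition4p3 (d : nat) (hd : (0 < d)%N) :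
  (forall a b : Col (H2 d), (exists f, lam f = a) -> (exists f, lam f = b) ->
      (sim1 a b <-> s1 a = s1 b)) /\
  (forall z : 'Z_2, exists f : Mo (H2 d), s1 (lam f) = z) /\
  (forall x y : Ob (H2 d), lam (idm x) = lam (idm y)) /\
  (forall f g : Mo (H2 d), msrc f = mtgt g ->
      s1 (lam (mcomp f g)) = s1 (lam f) + s1 (lam g)) /\
  (forall x : Ob (H2 d), s1 (lam (idm x)) = 0) /\
  is_mcfun (varpi d) /\
  (forall f : Mo (H2 d), fmo (mcF (varpi d)) f = \sum_(i < d) f.1 i) /\
  (forall C : catD, is_cat C ->
     forall P : mcfunD (H2 d) (disc C), is_mcfun P ->
       exists! Q : mcfunD (disc Z2cat) (disc C),
         is_mcfun Q /\ mcf_comp Q (varpi d) = P) /\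
  (forall C : catD, is_cat C -> forall d' : nat, (0 < d')%N ->
     exists (phi : {P : mcfunD (H2 d) (disc C) | is_mcfun P} ->
                   {P : mcfunD (H2 d') (disc C) | is_mcfun P})
            (psi : {P : mcfunD (H2 d') (disc C) | is_mcfun P} ->
                   {P : mcfunD (H2 d) (disc C) | is_mcfun P}),
       cancel phi psi /\ cancel psi phi).
Proof.
split; first by move=> a b _ _; exact: sim1_iff.
split; first by move=> z; exists (mz d z); exact: s1_mz.
split; first by [].
split; first by move=> f g _; exact: s1_comp.
split; first by move=> x; rewrite /= K big1 // => i _; rewrite ffunE.
split; first exact: varpi_mc.
split; first by move=> f; exact: K.
split.
  move=> C HC P HP; exists (buildQ P); split.
    by split; [exact: buildQ_mc | exact: buildQ_comp].
  by move=> Q [HQ e]; exact: buildQ_uniq.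
move=> C HC d' hd'.
pose mk (e e' : nat) (he : (0 < e)%N) (P : {P : mcfunD (H2 e) (disc C) | is_mcfun P}) :
  {P : mcfunD (H2 e') (disc C) | is_mcfun P} :=
  exist _ (mcf_comp (buildQ (sval P)) (varpi e'))
          (comp_mc (buildQ_mc he HC (svalP P)) (varpi_mc e')).
have key : forall e e' (he : (0 < e)%N) (he' : (0 < e')%N) P, mk e' e he' (mk e e' he P) = P.
  move=> e e' he he' [P HP]; apply: eq_sig_hprop; first by move=> *; apply: proof_irrelevance.
  rewrite /= (buildQ_uniq he' (buildQ_mc he HC HP) erefl).
  exact: buildQ_comp.
by exists (mk d d' hd), (mk d' d hd'); split => P; apply: key.
Qed.
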